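(* There is a unique algebra homomorphism $\psi:U^j\to U$ such that $\psi(\mathbf e_i)=f_i+f_{\bar i}$, $\psi(\mathbf f_i)=e_i+e_{\bar i}$ for $1\le i<n$; $\psi(\mathbf e_n)=2f_n$, $\psi(\mathbf f_n)=e_n$; $\psi(\mathbf d_i)=-h_i-h_{\bar i}$ for $1\le i\le n$; and $\psi(\mathbf d_{n+1})=-2h_{n+1}$.
   Context: Fix $n\ge1$. Let $\mathfrak g=\mathfrak{gl}_{2n+1}(\mathbb C)$ with matrix units $E_{a,b}$, $E_i=E_{i,i+1}$, $F_i=E_{i+1,i}$, $H_i=E_{i,i}$. Let $\theta(X)=JXJ^{-1}$ where $J$ is the antidiagonal permutation matrix (so $\theta(E_{a,b})=E_{2n+2-a,2n+2-b}$), $\mathfrak g^\theta$ its fixed-point Lie subalgebra and $U^j=U(\mathfrak g^\theta)$. Set $\mathbf e_i=E_i+F_{2n+1-i}$, $\mathbf f_i=F_i+E_{2n+1-i}$, $\mathbf d_i=H_i+H_{2n+2-i}$ ($1\le i\le n$), $\mathbf d_{n+1}=2H_{n+1}$; these generate $U^j$. Let $U=U(\mathfrak{gl}_{n+1}(\mathbb C)\oplus\mathfrak{gl}_n(\mathbb C))$, where $e_i=E_{i,i+1}$, $f_i=E_{i+1,i}$ ($1\le i\le n$), $h_i=E_{i,i}$ ($1\le i\le n+1$) are the Chevalley generators of $\mathfrak{gl}_{n+1}$, and $e_{\bar i}=E_{i,i+1},f_{\bar i}=E_{i+1,i}$ ($1\le i\le n-1$), $h_{\bar i}=E_{i,i}$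 ($1\le i\le n$) those of $\mathfrak{gl}_n$; elements of the two summands commute. *)

(* Defs.v *)
From HB Require Import structures.
From mathcomp Require Import all_boot all_order all_algebra.
Set Implicit Arguments. Unset Strict Implicit. Unset Printing Implicit Defensive.
Import Order.TTheory GRing.Theory Num.Theory.
Local Open Scope ring_scope.

Section Defs.
Variable F : fieldType.

Definition lie_hom_on (L : lmodType F) (br : L -> L -> L) (P : pred L)
    (A : algType F) (f : L -> A) : Prop :=
  (forall (a : F) (x y : L), x \in P -> y \in P -> f (a *: x + y) = a *: f x + f y) /\
  (forall x y : L, x \in P -> y \in P -> f (br x y) = f x * f y - f y * f x).

Definition is_UEA (L : lmodType F) (br : L -> L -> L) (P : pred L)
    (A : algType F) (iota : L -> A) : Prop :=
  lie_hom_on br P iota /\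
  forall (B : algType F) (phi : L -> B), lie_hom_on br P phi ->
    exists psi : {lrmorphism A -> B},
      (forall x, x \in P -> psi (iota x) = phi x) /\
      (forall psi' : {lrmorphism A -> B},
          (forall x, x \in P -> psi' (iota x) = phi x) -> psi' =1 psi).

(* matrix unit E_{a,b} with 1-based indices a, b *)
Definition Emx (k a b : nat) : 'M[F]_k :=
  \matrix_(i, j) (((i : nat) == a.-1) && ((j : nat) == b.-1))%:R.

Definition mxbr (k : nat) (X Y : 'M[F]_k) : 'M[F]_k := X *m Y - Y *m X.

Definition Jmx (n : nat) : 'M[F]_(n.*2.+1) :=
  \matrix_(i, j) ((i : nat) + j == n.*2)%:R.
Definition theta (n : nat) (X : 'M[F]_(n.*2.+1)) : 'M[F]_(n.*2.+1) :=
  Jmx n *m X *m invmx (Jmx n).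
Definition gtheta (n : nat) : pred 'M[F]_(n.*2.+1) := [pred X | theta X == X].

Definition be (n i : nat) : 'M[F]_(n.*2.+1) :=
  Emx _ i i.+1 + Emx _ (n.*2.+2 - i) (n.*2.+1 - i).
Definition bf (n i : nat) : 'M[F]_(n.*2.+1) :=
  Emx _ i.+1 i + Emx _ (n.*2.+1 - i) (n.*2.+2 - i).
Definition bd (n i : nat) : 'M[F]_(n.*2.+1) :=
  Emx _ i i + Emx _ (n.*2.+2 - i) (n.*2.+2 - i).
Definition bd_last (n : nat) : 'M[F]_(n.*2.+1) := Emx _ n.+1 n.+1 *+ 2.

(* gl_{n+1} (+) gl_n as pairs of matrices, componentwise bracket *)
Definition pbr (n : nat) (X Y : 'M[F]_n.+1 * 'M[F]_n) : 'M[F]_n.+1 * 'M[F]_n :=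
  (mxbr X.1 Y.1, mxbr X.2 Y.2).

Definition ce (n i : nat) : 'M[F]_n.+1 * 'M[F]_n := (Emx _ i i.+1, 0).
Definition cf (n i : nat) : 'M[F]_n.+1 * 'M[F]_n := (Emx _ i.+1 i, 0).
Definition ch (n i : nat) : 'M[F]_n.+1 * 'M[F]_n := (Emx _ i i, 0).
Definition ceb (n i : nat) : 'M[F]_n.+1 * 'M[F]_n := (0, Emx _ i i.+1).
Definition cfb (n i : nat) : 'M[F]_n.+1 * 'M[F]_n := (0, Emx _ i.+1 i).
Definition chb (n i : nat) : 'M[F]_n.+1 * 'M[F]_n := (0, Emx _ i i).

Definition psi_spec (n : nat) (Uj U : algType F)
    (iota : 'M[F]_(n.*2.+1) -> Uj) (jota : 'M[F]_n.+1 * 'M[F]_n -> U)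
    (psi : Uj -> U) : Prop :=
  (forall i, (1 <= i < n)%N ->
      psi (iota (be n i)) = jota (cf n i) + jota (cfb n i) /\
      psi (iota (bf n i)) = jota (ce n i) + jota (ceb n i)) /\
  psi (iota (be n n)) = jota (cf n n) *+ 2 /\
  psi (iota (bf n n)) = jota (ce n n) /\
  (forall i, (1 <= i <= n)%N ->
      psi (iota (bd n i)) = - jota (ch n i) - jota (chb n i)) /\
  psi (iota (bd_last n)) = - (jota (ch n n.+1) *+ 2).

End Defs.

(* Main.v *)
Require Import Defs.
From HB Require Import structures.
From mathcomp Require Import all_boot all_order all_algebra.
From mathcomp Require Import zify ring.
Import Order.TTheory GRing.Theory Num.Theory.
Local Open Scope ring_scope.
Set Implicit Arguments. Unset Strict Implicit. Unset Printing Implicit Defensive.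

Lemma inord_eq (N x y : nat) : (x <= N)%N -> (y <= N)%N ->
  ((@inord N x) == inord y) = (x == y).
Proof. by move=> hx hy; rewrite -(inj_eq val_inj) /= !inordK. Qed.

Lemma ord_inord_eq (N x : nat) (i : 'I_N.+1) : (x <= N)%N ->
  (i == inord x) = (i == x :> nat).
Proof. by move=> hx; rewrite -(inj_eq val_inj) /= inordK. Qed.

Definition D (F : fieldType) (n a b : nat) : 'M[F]_(n.*2.+1) :=
  delta_mx (inord a) (inord b).
Definition Y (F : fieldType) (n a b : nat) : 'M[F]_(n.*2.+1) :=
  D F n a b + D F n (n.*2 - a) (n.*2 - b).

Lemma D_mul (F : fieldType) n a b c d : (b <= n.*2)%N -> (c <= n.*2)%N ->
  D F n a b *m D F n c d = D F n a d *+ (b == c).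
Proof. by move=> hb hc; rewrite /D mul_delta_mx_cond inord_eq. Qed.

Lemma Y_sym (F : fieldType) n a b : (a <= n.*2)%N -> (b <= n.*2)%N ->
  Y F n (n.*2 - a) (n.*2 - b) = Y F n a b.
Proof. by move=> ha hb; rewrite /Y !subKn // addrC. Qed.

Lemma Y_mul (F : fieldType) n a b c d : (a <= n.*2)%N -> (b <= n.*2)%N ->
  (c <= n.*2)%N -> (d <= n.*2)%N ->
  Y F n a b *m Y F n c d = Y F n a d *+ (b == c) + Y F n a (n.*2 - d) *+ (b == n.*2 - c)%N.
Proof.
move=> ha hb hc hd; rewrite /Y mulmxDl !mulmxDr !D_mul; try lia.
rewrite !subKn //.
have -> : (n.*2 - b == c)%N = (b == n.*2 - c)%N by apply/eqP/eqP; lia.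
have -> : (n.*2 - b == n.*2 - c)%N = (b == c) by apply/eqP/eqP; lia.
by rewrite !mulrnDl [RHS]addrACA [in RHS](addrC (D F n (n.*2 - a) (n.*2 - d) *+ _)).

Qed.

Lemma Y_br (F : fieldType) n a b c d : (a <= n.*2)%N -> (b <= n.*2)%N ->
  (c <= n.*2)%N -> (d <= n.*2)%N ->
  mxbr (Y F n a b) (Y F n c d) =
   Y F n a d *+ (b == c) + Y F n a (n.*2 - d) *+ (b == n.*2 - c)%N
   - (Y F n c b *+ (d == a) + Y F n c (n.*2 - b) *+ (d == n.*2 - a)%N).
Proof. by move=> *; rewrite /mxbr !Y_mul. Qed.

Lemma Jmx_mull (F : fieldType) n (X : 'M[F]_(n.*2.+1)) :
  Jmx F n *m X = \matrix_(i, j) X (rev_ord i) j.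
Proof.
apply/matrixP => i j; rewrite !mxE (bigD1 (rev_ord i)) //= big1 ?addr0.
  rewrite !mxE /=; have -> : (i + (n.*2.+1 - i.+1) == n.*2)%N by apply/eqP; have := ltn_ord i; lia.
  by rewrite mul1r.
move=> k hk; rewrite mxE; case: eqP => h; last by rewrite mul0r.
by case/eqP: hk; apply: val_inj => /=; have := ltn_ord i; lia.
Qed.

Lemma Jmx_mulr (F : fieldType) n (X : 'M[F]_(n.*2.+1)) :
  X *m Jmx F n = \matrix_(i, j) X i (rev_ord j).
Proof.
apply/matrixP => i j; rewrite !mxE (bigD1 (rev_ord j)) //= big1 ?addr0.
  rewrite !mxE /=; have -> : ((n.*2.+1 - j.+1) + j == n.*2)%N by apply/eqP; have := ltn_ord j; lia.
  by rewrite mulr1.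
move=> k hk; rewrite mxE; case: eqP => h; last by rewrite mulr0.
by case/eqP: hk; apply: val_inj => /=; have := ltn_ord j; lia.
Qed.

Lemma Jmx_invmx (F : fieldType) n : invmx (Jmx F n) = Jmx F n.
Proof.
have JJ : Jmx F n *m Jmx F n = 1%:M.
  rewrite Jmx_mull; apply/matrixP => i j; rewrite !mxE /=.
  have := ltn_ord i; have := ltn_ord j => hj hi.
  congr ((_ : bool)%:R); apply/eqP/eqP => h; first (apply: val_inj => /=; lia).
  by rewrite h; lia.
have [uJ _] := mulmx1_unit JJ.
by rewrite -[LHS]mulmx1 -JJ mulmxA mulVmx // mul1mx.
Qed.

Lemma theta_E (F : fieldType) n (X : 'M[F]_(n.*2.+1)) :
  theta X = \matrix_(i, j) X (rev_ord i) (rev_ord j).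
Proof.
rewrite /theta Jmx_invmx Jmx_mulr Jmx_mull; apply/matrixP => i j; by rewrite !mxE.
Qed.

Definition symP (F : fieldType) n (X : 'M[F]_(n.*2.+1)) :=
  forall i j, X (rev_ord i) (rev_ord j) = X i j.

Lemma gthetaP (F : fieldType) n (X : 'M[F]_(n.*2.+1)) :
  reflect (symP X) (X \in @gtheta F n).
Proof.
rewrite inE theta_E; apply: (iffP eqP) => [h i j|h].
  by have := congr1 (fun M : 'M[F]_(n.*2.+1) => M i j) h; rewrite mxE.
by apply/matrixP => i j; rewrite mxE h.
Qed.

Lemma rev_inord_eq n (i : 'I_n.*2.+1) a : (a <= n.*2)%N ->
  (rev_ord i == inord a) = (i == inord (n.*2 - a)).
Proof.
move=> ha; rewrite !ord_inord_eq //; last lia.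
have := ltn_ord i => hi; apply/eqP/eqP => /= h; lia.
Qed.

Lemma D_rev (F : fieldType) n a b i j : (a <= n.*2)%N -> (b <= n.*2)%N ->
  D F n a b (rev_ord i) (rev_ord j) = D F n (n.*2 - a) (n.*2 - b) i j.
Proof. by move=> ha hb; rewrite !mxE !rev_inord_eq. Qed.

Lemma Y_in (F : fieldType) n a b : (a <= n.*2)%N -> (b <= n.*2)%N ->
  Y F n a b \in @gtheta F n.
Proof.
move=> ha hb; apply/gthetaP => i j; rewrite /Y !mxE.
rewrite !rev_inord_eq; try lia. rewrite !subKn //.
by rewrite addrC.
Qed.

Lemma gtheta_lin (F : fieldType) n (c : F) (X Z : 'M[F]_(n.*2.+1)) :
  X \in @gtheta F n -> Z \in @gtheta F n -> c *: X + Z \in @gtheta F n.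
Proof.
move=> /gthetaP hX /gthetaP hZ; apply/gthetaP => i j.
by rewrite !mxE hX hZ.
Qed.

Lemma gtheta0 (F : fieldType) n : (0 : 'M[F]_(n.*2.+1)) \in @gtheta F n.
Proof. by apply/gthetaP => i j; rewrite !mxE. Qed.

Lemma gthetaD (F : fieldType) n (X Z : 'M[F]_(n.*2.+1)) :
  X \in @gtheta F n -> Z \in @gtheta F n -> X + Z \in @gtheta F n.
Proof. by move=> hX hZ; have := gtheta_lin 1 hX hZ; rewrite scale1r. Qed.

Lemma gthetaZ (F : fieldType) n c (X : 'M[F]_(n.*2.+1)) :
  X \in @gtheta F n -> c *: X \in @gtheta F n.
Proof. by move=> hX; have := gtheta_lin c hX (gtheta0 F n); rewrite addr0. Qed.

Lemma gthetaN (F : fieldType) n (X : 'M[F]_(n.*2.+1)) :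
  X \in @gtheta F n -> - X \in @gtheta F n.
Proof. by move=> hX; have := gthetaZ (-1) hX; rewrite scaleN1r. Qed.

Lemma gthetaMn (F : fieldType) n (X : 'M[F]_(n.*2.+1)) (k : bool) :
  X \in @gtheta F n -> X *+ k \in @gtheta F n.
Proof. by case: k => hX; rewrite ?mulr1n ?mulr0n // gtheta0. Qed.

Lemma lh0 (F : fieldType) (L : lmodType F) br (P : pred L) (A : algType F) f :
  @lie_hom_on F L br P A f -> 0 \in P -> f 0 = 0.
Proof.
move=> [hl _] h0; have := hl 1 0 0 h0 h0; rewrite scale1r addr0.
move=> e; have := congr1 (fun t => t - f 0) e; rewrite /= addrK subrr.
by rewrite scale1r => ->.
Qed.

Lemma lhD (F : fieldType) (L : lmodType F) br (P : pred L) (A : algType F) f x y :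
  @lie_hom_on F L br P A f -> x \in P -> y \in P -> f (x + y) = f x + f y.
Proof. by move=> [hl _] hx hy; have := hl 1 x y hx hy; rewrite !scale1r. Qed.

Lemma lhZ (F : fieldType) (L : lmodType F) br (P : pred L) (A : algType F) f c x :
  @lie_hom_on F L br P A f -> 0 \in P -> x \in P -> f (c *: x) = c *: f x.
Proof.
move=> h h0 hx; have := h.1 c x 0 hx h0; rewrite !addr0 => ->.
by rewrite (lh0 h h0) addr0.
Qed.

Lemma lhN (F : fieldType) (L : lmodType F) br (P : pred L) (A : algType F) f x :
  @lie_hom_on F L br P A f -> 0 \in P -> x \in P -> f (- x) = - f x.
Proof. by move=> h h0 hx; rewrite -scaleN1r (lhZ _ h) // scaleN1r. Qed.

Lemma sum2 (F : fieldType) N (c : 'I_N -> 'I_N -> F) (P Q : pred 'I_N) kp kq :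
  (forall i, P i = (i == kp)) -> (forall j, Q j = (j == kq)) ->
  \sum_i \sum_j c i j * ((P i) && (Q j))%:R = c kp kq.
Proof.
move=> hP hQ; rewrite (bigD1 kp) //=.
rewrite [X in _ + X]big1 ?addr0 => [|i hi].
  rewrite (bigD1 kq) //= [X in _ + X]big1 ?addr0 ?hP ?hQ ?eqxx ?mulr1 // => j hj.
  by rewrite hQ (negbTE hj) andbF mulr0.
by apply: big1 => j _; rewrite hP (negbTE hi) mulr0.
Qed.

Lemma Y_entry (F : fieldType) n a b (p q : 'I_n.*2.+1) :
  (a <= n.*2)%N -> (b <= n.*2)%N ->
  Y F n a b p q = ((p == a :> nat) && (q == b :> nat))%:R +
     ((p == (n.*2 - a)%N :> nat) && (q == (n.*2 - b)%N :> nat))%:R.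
Proof. by move=> ha hb; rewrite !mxE !ord_inord_eq //; lia. Qed.

Lemma decompY (F : numFieldType) n (X : 'M[F]_(n.*2.+1)) : X \in @gtheta F n ->
  X = 2^-1 *: \sum_(i < n.*2.+1) \sum_(j < n.*2.+1) X i j *: Y F n i j.
Proof.
move=> /gthetaP hX; apply/matrixP => p q.
rewrite mxE summxE.
under eq_bigr => i _ do rewrite summxE.
have hY : forall (i j : 'I_n.*2.+1), Y F n i j p q = ((p == i :> nat) && (q == j :> nat))%:R +
     ((p == (n.*2 - i)%N :> nat) && (q == (n.*2 - j)%N :> nat))%:R.
  by move=> i j; rewrite Y_entry // -ltnS.
under eq_bigr => i _ do under eq_bigr => j _ do rewrite mxE hY mulrDr.
under eq_bigr => i _ do rewrite big_split /=.
rewrite big_split /=.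
rewrite (@sum2 _ _ (fun i j => X i j) (fun i => p == i :> nat) (fun j => q == j :> nat) p q);
  last 2 first.
- by move=> i; apply/eqP/eqP => h; [apply: val_inj|rewrite h].
- by move=> i; apply/eqP/eqP => h; [apply: val_inj|rewrite h].
rewrite (@sum2 _ _ (fun i j => X i j) (fun i : 'I_n.*2.+1 => p == (n.*2 - i)%N :> nat)
     (fun j : 'I_n.*2.+1 => q == (n.*2 - j)%N :> nat) (rev_ord p) (rev_ord q)); last 2 first.
- move=> j; have := ltn_ord j; have := ltn_ord p => h1 h2.
  apply/eqP/eqP => h; [apply: val_inj => /=|rewrite h /=]; lia.
- move=> j; have := ltn_ord j; have := ltn_ord q => h1 h2.
  apply/eqP/eqP => h; [apply: val_inj => /=|rewrite h /=]; lia.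
rewrite hX -mulr2n -[X p q *+ 2]mulr_natl mulrA mulVf ?mul1r //.
by rewrite pnatr_eq0.
Qed.

Lemma lie_agree (F : numFieldType) n (B : algType F) (f g : 'M[F]_(n.*2.+1) -> B)
  (hf : lie_hom_on (@mxbr F _) (@gtheta F n) f)
  (hg : lie_hom_on (@mxbr F _) (@gtheta F n) g)
  (hd : forall a, (a <= n)%N -> f (Y F n a a) = g (Y F n a a))
  (he : forall a, (a < n.*2)%N -> f (Y F n a a.+1) = g (Y F n a a.+1)) :
  forall X, X \in @gtheta F n -> f X = g X.
Proof.
have h0 := gtheta0 F n.
have YA : forall m a b, (a <= n.*2)%N -> (b <= n.*2)%N -> ((a - b) + (b - a) <= m)%N ->
    f (Y F n a b) = g (Y F n a b).
  elim=> [|m IH].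
    move=> a b ha hb hm; have -> : b = a by lia.
    case: (leqP a n) => h; first exact: hd.
    by rewrite -Y_sym //; apply: hd; lia.
  have upper : forall a b, (a < b)%N -> (b <= n.*2)%N -> (b - a = m.+1)%N ->
      f (Y F n a b) = g (Y F n a b).
    move=> a b hab hb hdist.
    case: m IH hdist => [|m] IH hdist.
      have -> : b = a.+1 by lia.
      apply: he; lia.
    have hbr := @Y_br F n a b.-1 b.-1 b.
    rewrite eqxx (_ : (b == a) = false) ?mulr1n ?mulr0n ?add0r in hbr; last first.
      by apply/eqP; lia.
    have Ya := @Y_in F n a b.-1; have Yb := @Y_in F n b.-1 b.
    have fbr : f (mxbr (Y F n a b.-1) (Y F n b.-1 b)) = g (mxbr (Y F n a b.-1) (Y F n b.-1 b)).
      rewrite hf.2 ?Ya ?Yb; try lia. rewrite hg.2 ?Ya ?Yb; try lia.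
      rewrite (IH a b.-1) ?(IH b.-1 b) //; lia.
    rewrite hbr in fbr; try lia.
    have t1 : f (Y F n a (n.*2 - b) *+ (b.-1 == n.*2 - b.-1)%N) =
              g (Y F n a (n.*2 - b) *+ (b.-1 == n.*2 - b.-1)%N).
      case: eqP => h; last by rewrite !mulr0n (lh0 hf) // (lh0 hg).
      by rewrite !mulr1n; apply: IH; lia.
    have t2 : f (Y F n b.-1 (n.*2 - b.-1) *+ (b == n.*2 - a)%N) =
              g (Y F n b.-1 (n.*2 - b.-1) *+ (b == n.*2 - a)%N).
      case: eqP => h; last by rewrite !mulr0n (lh0 hf) // (lh0 hg).
      by rewrite !mulr1n; apply: IH; lia.
    have m1 : Y F n a b \in @gtheta F n by apply: Y_in; lia.
    have m2 : Y F n a (n.*2 - b) *+ (b.-1 == n.*2 - b.-1)%N \in @gtheta F n.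
      by apply: gthetaMn; apply: Y_in; lia.
    have m3 : Y F n b.-1 (n.*2 - b.-1) *+ (b == n.*2 - a)%N \in @gtheta F n.
      by apply: gthetaMn; apply: Y_in; lia.
    move: fbr.
    rewrite (lhD hf (gthetaD m1 m2) (gthetaN m3)) (lhD hg (gthetaD m1 m2) (gthetaN m3)).
    rewrite (lhD hf m1 m2) (lhD hg m1 m2) (lhN hf h0 m3) (lhN hg h0 m3) t1 t2.
    by move=> /addIr /addIr.
  move=> a b ha hb hm.
  case: (leqP ((a - b) + (b - a)) m) => hm'; first exact: IH.
  case: (ltnP a b) => hab.
    apply: upper => //; lia.
  by rewrite -Y_sym //; apply: upper; lia.
have K : forall (c : 'I_n.*2.+1 -> 'I_n.*2.+1 -> F),
   let S := \sum_(i < n.*2.+1) \sum_(j < n.*2.+1) c i j *: Y F n i j in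
   S \in @gtheta F n /\ f S = g S.
  move=> c /=.
  apply: (big_ind (fun S => S \in @gtheta F n /\ f S = g S)).
  - by rewrite (lh0 hf) // (lh0 hg).
  - move=> x y [hx ex] [hy ey]; split; first exact: gthetaD.
    by rewrite (lhD hf hx hy) (lhD hg hx hy) ex ey.
  move=> i _.
  apply: (big_ind (fun S => S \in @gtheta F n /\ f S = g S)).
  - by rewrite (lh0 hf) // (lh0 hg).
  - move=> x y [hx ex] [hy ey]; split; first exact: gthetaD.
    by rewrite (lhD hf hx hy) (lhD hg hx hy) ex ey.
  move=> j _.
  have hi := ltn_ord i; have hj := ltn_ord j.
  have hy : Y F n i j \in @gtheta F n by apply: Y_in; lia.
  split; first exact: gthetaZ.
  rewrite (lhZ _ hf) // (lhZ _ hg) //; congr (_ *: _).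
  apply: (YA ((i - j) + (j - i))%N); lia.
move=> X hX; rewrite (decompY hX).
have [hS eS] := K (fun i j => X i j).
by rewrite (lhZ _ hf) // (lhZ _ hg) // eS.
Qed.

Lemma sumI (F : fieldType) M (h : nat -> F) m :
  \sum_(a < M) ((a : nat) == m)%:R * h a = if (m < M)%N then h m else 0.
Proof.
case: ltnP => hm.
  rewrite (bigD1 (Ordinal hm)) //= eqxx mul1r big1 ?addr0 // => a ha.
  rewrite (_ : (a == m :> nat) = false) ?mul0r //; apply/eqP => e.
  by case/eqP: ha; apply: val_inj.
apply: big1 => a _; rewrite (_ : (a == m :> nat) = false) ?mul0r //.
by apply/eqP => e; have := ltn_ord a; lia.
Qed.

Definition sg (F : fieldType) (k : nat) : F := (-1) ^+ k.
Definition cc (F : fieldType) (n a : nat) : F := if a == n then 2^-1 else 1.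

Lemma sg2 (F : fieldType) k : sg F k * sg F k = 1.
Proof. by rewrite /sg -exprD -signr_odd oddD addbb. Qed.

Definition Q1 (F : fieldType) n : 'M[F]_(n.*2.+1, n.+1) :=
  \matrix_(k, b) (sg F b * (((k : nat) == b)%:R + ((k : nat) == (n.*2 - b)%N)%:R)).
Definition P1 (F : fieldType) n : 'M[F]_(n.+1, n.*2.+1) :=
  \matrix_(a, k) (sg F a * cc F n a * ((k : nat) == a)%:R).
Definition Q2 (F : fieldType) n : 'M[F]_(n.*2.+1, n) :=
  \matrix_(k, b) (sg F b * (((k : nat) == b)%:R - ((k : nat) == (n.*2 - b)%N)%:R)).
Definition P2 (F : fieldType) n : 'M[F]_(n, n.*2.+1) :=
  \matrix_(a, k) (sg F a * ((k : nat) == a)%:R).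

Lemma XQ1 (F : fieldType) n (X : 'M[F]_(n.*2.+1)) k b :
  (X *m Q1 F n) k b = sg F b * (X k (inord b) + X k (inord (n.*2 - b))).
Proof.
rewrite mxE.
under eq_bigr => l _ do rewrite mxE -[X k l](congr1 (X k) (inord_val l)).
have -> : forall (e : 'I_n.*2.+1 -> F), \sum_l e l = \sum_(l < n.*2.+1) e l by [].
transitivity (\sum_(l < n.*2.+1) (((l : nat) == b)%:R * (sg F b * X k (inord l)) +
    ((l : nat) == (n.*2 - b)%N)%:R * (sg F b * X k (inord l)))).
  by apply: eq_bigr => l _; ring.
rewrite big_split /= !(@sumI _ _ (fun x => sg F b * X k (inord x))).
have hb := ltn_ord b.
rewrite ifT; last lia. rewrite ifT; last lia.
ring.
Qed.

Lemma XQ2 (F : fieldType) n (X : 'M[F]_(n.*2.+1)) k b :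
  (X *m Q2 F n) k b = sg F b * (X k (inord b) - X k (inord (n.*2 - b))).
Proof.
rewrite mxE.
under eq_bigr => l _ do rewrite mxE -[X k l](congr1 (X k) (inord_val l)).
have -> : forall (e : 'I_n.*2.+1 -> F), \sum_l e l = \sum_(l < n.*2.+1) e l by [].
transitivity (\sum_(l < n.*2.+1) (((l : nat) == b)%:R * (sg F b * X k (inord l)) +
    ((l : nat) == (n.*2 - b)%N)%:R * (- (sg F b * X k (inord l))))).
  by apply: eq_bigr => l _; ring.
rewrite big_split /= (@sumI _ _ (fun x => sg F b * X k (inord x))).
rewrite (@sumI _ _ (fun x => - (sg F b * X k (inord x)))).
have hb := ltn_ord b.
rewrite ifT; last lia. rewrite ifT; last lia.
ring.
Qed.

Lemma P1E (F : fieldType) n m (Z : 'M[F]_(n.*2.+1, m)) a j :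
  (P1 F n *m Z) a j = sg F a * cc F n a * Z (inord a) j.
Proof.
rewrite mxE.
under eq_bigr => l _ do rewrite mxE -[Z l j](congr1 (fun l => Z l j) (inord_val l)).
transitivity (\sum_(l < n.*2.+1) (((l : nat) == a)%:R * (sg F a * cc F n a * Z (inord l) j))).
  by apply: eq_bigr => l _; ring.
rewrite (@sumI _ _ (fun x => sg F a * cc F n a * Z (inord x) j)) ifT //.
have := ltn_ord a; lia.
Qed.

Lemma P2E (F : fieldType) n m (Z : 'M[F]_(n.*2.+1, m)) a j :
  (P2 F n *m Z) a j = sg F a * Z (inord a) j.
Proof.
rewrite mxE.
under eq_bigr => l _ do rewrite mxE -[Z l j](congr1 (fun l => Z l j) (inord_val l)).
transitivity (\sum_(l < n.*2.+1) (((l : nat) == a)%:R * (sg F a * Z (inord l) j))).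
  by apply: eq_bigr => l _; ring.
rewrite (@sumI _ _ (fun x => sg F a * Z (inord x) j)) ifT //.
have := ltn_ord a; lia.
Qed.

Lemma rev_inord n x : (x <= n.*2)%N ->
  rev_ord (inord x : 'I_n.*2.+1) = inord (n.*2 - x).
Proof. move=> hx; apply: val_inj => /=; rewrite !inordK; lia. Qed.

Lemma QP1 (F : numFieldType) n m (Z : 'M[F]_(n.*2.+1, m)) :
  (forall k j, Z (rev_ord k) j = Z k j) -> Q1 F n *m (P1 F n *m Z) = Z.
Proof.
move=> hZ; apply/matrixP => k j; rewrite mxE.
have hk := ltn_ord k.
transitivity (\sum_(a < n.+1) (((a : nat) == k)%:R * (cc F n a * Z (inord a) j) +
    ((a : nat) == (n.*2 - k)%N)%:R * (cc F n a * Z (inord a) j))).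
  apply: eq_bigr => a _; rewrite mxE P1E.
  have ha := ltn_ord a.
  have -> : ((k : nat) == a) = ((a : nat) == k) by rewrite eq_sym.
  have -> : ((k : nat) == (n.*2 - a)%N) = ((a : nat) == (n.*2 - k)%N) by apply/eqP/eqP; lia.
  transitivity (sg F a * sg F a * (((a : nat) == k)%:R * (cc F n a * Z (inord a) j) +
    ((a : nat) == (n.*2 - k)%N)%:R * (cc F n a * Z (inord a) j))); first ring.
  by rewrite sg2 mul1r.
rewrite big_split /= (@sumI _ _ (fun x => cc F n x * Z (inord x) j)).
rewrite (@sumI _ _ (fun x => cc F n x * Z (inord x) j)).
rewrite /cc.
case: (ltngtP k n) => hkn.
- have -> : (k < n.+1)%N = true by lia.
  have -> : (n.*2 - k < n.+1)%N = false by lia.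
  by rewrite inord_val mul1r addr0.
- have -> : (k < n.+1)%N = false by lia.
  have -> : (n.*2 - k < n.+1)%N = true by lia.
  have -> : ((n.*2 - k)%N == n) = false by apply/eqP; lia.
  by rewrite -rev_inord ?inord_val ?hZ ?mul1r ?add0r //; lia.
- have -> : (k < n.+1)%N = true by lia.
  have -> : (n.*2 - k = k)%N by lia.
  rewrite ifT; last lia.
  rewrite hkn eqxx; have -> : (inord n : 'I_n.*2.+1) = k by apply: val_inj; rewrite /= inordK; lia.
  by field.
Qed.

Lemma QP2 (F : numFieldType) n m (Z : 'M[F]_(n.*2.+1, m)) :
  (forall k j, Z (rev_ord k) j = - Z k j) -> Q2 F n *m (P2 F n *m Z) = Z.
Proof.
move=> hZ; apply/matrixP => k j; rewrite mxE.
have hk := ltn_ord k.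
transitivity (\sum_(a < n) (((a : nat) == k)%:R * (Z (inord a) j) +
    ((a : nat) == (n.*2 - k)%N)%:R * (- Z (inord a) j))).
  apply: eq_bigr => a _; rewrite mxE P2E.
  have ha := ltn_ord a.
  have -> : ((k : nat) == a) = ((a : nat) == k) by rewrite eq_sym.
  have -> : ((k : nat) == (n.*2 - a)%N) = ((a : nat) == (n.*2 - k)%N) by apply/eqP/eqP; lia.
  transitivity (sg F a * sg F a * (((a : nat) == k)%:R * (Z (inord a) j) +
    ((a : nat) == (n.*2 - k)%N)%:R * (- Z (inord a) j))); first ring.
  by rewrite sg2 mul1r.
rewrite big_split /= (@sumI _ _ (fun x => Z (inord x) j)).
rewrite (@sumI _ _ (fun x => - Z (inord x) j)).
case: (ltngtP k n) => hkn.
-   have -> : (n.*2 - k < n)%N = false by lia.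
  by rewrite inord_val addr0.
- have -> : (n.*2 - k < n)%N = true by lia.
  by rewrite -rev_inord ?inord_val ?hZ ?opprK ?add0r //; lia.
- have -> : (n.*2 - k < n)%N = false by lia.
  have e : rev_ord k = k by apply: val_inj => /=; lia.
  have := hZ k j; rewrite e => /eqP; rewrite -subr_eq0 opprK -[Z k j + Z k j]mulr2n mulrn_eq0 /= => /eqP ->.

  by rewrite addr0.
Qed.

Definition AA (F : fieldType) n (X : 'M[F]_(n.*2.+1)) := P1 F n *m (X *m Q1 F n).
Definition BB (F : fieldType) n (X : 'M[F]_(n.*2.+1)) := P2 F n *m (X *m Q2 F n).
Definition Phi (F : fieldType) n (X : 'M[F]_(n.*2.+1)) : 'M[F]_n.+1 * 'M[F]_n :=
  (- (AA X)^T, - (BB X)^T).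

Lemma symQ1 (F : fieldType) n (W : 'M[F]_(n.*2.+1)) : symP W ->
  forall k j, (W *m Q1 F n) (rev_ord k) j = (W *m Q1 F n) k j.
Proof.
move=> hW k j; rewrite !XQ1; have hj := ltn_ord j.
rewrite -{1}(hW k (inord j)) -{1}(hW k (inord (n.*2 - j))) !rev_inord ?subKn; try lia.
by rewrite addrC.
Qed.

Lemma symQ2 (F : fieldType) n (W : 'M[F]_(n.*2.+1)) : symP W ->
  forall k j, (W *m Q2 F n) (rev_ord k) j = - (W *m Q2 F n) k j.
Proof.
move=> hW k j; rewrite !XQ2; have hj := ltn_ord j.
rewrite -{1}(hW k (inord j)) -{1}(hW k (inord (n.*2 - j))) !rev_inord ?subKn; try lia.
ring.
Qed.

Lemma AA_mul (F : numFieldType) n (X W : 'M[F]_(n.*2.+1)) : symP W ->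
  AA (X *m W) = AA X *m AA W.
Proof.
move=> hW; have e := QP1 (symQ1 hW); rewrite /AA -[X *m W *m _]mulmxA.
by rewrite -{1}e !mulmxA.
Qed.

Lemma BB_mul (F : numFieldType) n (X W : 'M[F]_(n.*2.+1)) : symP W ->
  BB (X *m W) = BB X *m BB W.
Proof.
move=> hW; have e := QP2 (symQ2 hW); rewrite /BB -[X *m W *m _]mulmxA.
by rewrite -{1}e !mulmxA.
Qed.

Lemma AA_lin (F : fieldType) n (c : F) (X W : 'M[F]_(n.*2.+1)) :
  AA (c *: X + W) = c *: AA X + AA W.
Proof. by rewrite /AA mulmxDl mulmxDr -scalemxAl -scalemxAr. Qed.

Lemma BB_lin (F : fieldType) n (c : F) (X W : 'M[F]_(n.*2.+1)) :
  BB (c *: X + W) = c *: BB X + BB W.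
Proof. by rewrite /BB mulmxDl mulmxDr -scalemxAl -scalemxAr. Qed.

Lemma Phi_lin (F : fieldType) n (c : F) (X W : 'M[F]_(n.*2.+1)) :
  Phi (c *: X + W) = c *: Phi X + Phi W.
Proof.
rewrite /Phi AA_lin BB_lin.
rewrite !linearD !linearZ /=.
by [].
Qed.

Lemma tr_br (F : fieldType) m (A B : 'M[F]_m) :
  - (A *m B - B *m A)^T = mxbr (- A^T) (- B^T).
Proof.
rewrite /mxbr !mulNmx !mulmxN !opprK linearB /= !trmx_mul opprB.
by [].
Qed.

Lemma Phi_br (F : numFieldType) n (X W : 'M[F]_(n.*2.+1)) : symP X -> symP W ->
  Phi (mxbr X W) = pbr (Phi X) (Phi W).
Proof.
move=> hX hW; rewrite /Phi /pbr /=.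
have eA : AA (mxbr X W) = AA X *m AA W - AA W *m AA X.
  by rewrite /mxbr -AA_mul // -AA_mul // -[AA (_ - _)]/(P1 F n *m _) mulmxBl mulmxBr.
have eB : BB (mxbr X W) = BB X *m BB W - BB W *m BB X.
  by rewrite /mxbr -BB_mul // -BB_mul // -[BB (_ - _)]/(P2 F n *m _) mulmxBl mulmxBr.
by rewrite eA eB !tr_br.
Qed.

Lemma Yinord (F : fieldType) n a b x y : (a <= n.*2)%N -> (b <= n.*2)%N ->
  (x <= n.*2)%N -> (y <= n.*2)%N ->
  Y F n a b (inord x) (inord y) = ((x == a) && (y == b))%:R +
     ((x == (n.*2 - a)%N) && (y == (n.*2 - b)%N))%:R.
Proof. by move=> *; rewrite Y_entry // !inordK. Qed.

Lemma Phi1Y (F : fieldType) n a b (p q : 'I_n.+1) : (a <= n.*2)%N -> (b <= n.*2)%N ->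
  (Phi (Y F n a b)).1 p q = - (sg F q * cc F n q * sg F p *
    ((((q == a :> nat) && (p == b :> nat))%:R + ((q == (n.*2 - a)%N :> nat) && (p == (n.*2 - b)%N :> nat))%:R) +
     (((q == a :> nat) && ((n.*2 - p)%N == b))%:R + ((q == (n.*2 - a)%N :> nat) && ((n.*2 - p)%N == (n.*2 - b)%N))%:R))).
Proof.
move=> ha hb; have hp := ltn_ord p; have hq := ltn_ord q.
have NT : forall m (M : 'M[F]_m) i j, (- M^T) i j = - M j i by move=> *; rewrite !mxE.
rewrite /Phi /= NT /AA P1E XQ1 !Yinord; try lia.
by rewrite !mulrA.
Qed.

Lemma Phi2Y (F : fieldType) n a b (p q : 'I_n) : (a <= n.*2)%N -> (b <= n.*2)%N ->
  (Phi (Y F n a b)).2 p q = - (sg F q * sg F p *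
    ((((q == a :> nat) && (p == b :> nat))%:R + ((q == (n.*2 - a)%N :> nat) && (p == (n.*2 - b)%N :> nat))%:R) -
     (((q == a :> nat) && ((n.*2 - p)%N == b))%:R + ((q == (n.*2 - a)%N :> nat) && ((n.*2 - p)%N == (n.*2 - b)%N))%:R))).
Proof.
move=> ha hb; have hp := ltn_ord p; have hq := ltn_ord q.
have NT : forall m (M : 'M[F]_m) i j, (- M^T) i j = - M j i by move=> *; rewrite !mxE.
rewrite /Phi /= NT /BB P2E XQ2 !Yinord; try lia.
by rewrite !mulrA.
Qed.

Ltac dec := repeat (match goal with
 | |- context [?x == ?y :> nat] =>
   first [ rewrite (_ : (x == y) = false); last (by apply/eqP; lia)
         | rewrite (_ : (x == y) = true); last (by apply/eqP; lia) ]
 end).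
Ltac split_eqs := dec; try (match goal with |- context [?x == ?y :> nat] =>
   case: (boolP (x == y)) => /eqP ?; split_eqs end).

Lemma sgS (F : fieldType) k : sg F k.+1 = - sg F k.
Proof. by rewrite /sg exprS mulN1r. Qed.

Lemma sg_next (F : fieldType) (x y : nat) : x = y.+1 -> sg F x = - sg F y.
Proof. by move=> ->; exact: sgS. Qed.

Ltac sgfin F x y := rewrite (@sg_next F x y); last lia;
  transitivity (sg F y * sg F y); [ring | exact: sg2].

Ltac sgclose F x y := rewrite (@sg_next F x y); last lia;
  rewrite /sg -signr_odd; case: (odd y) => /=; first [by ring | by field].
Ltac sgeq F x y := rewrite (_ : x = y); last lia;
  rewrite /sg -signr_odd; case: (odd y) => /=; first [by ring | by field].

Lemma Phi_e (F : numFieldType) n i : (1 <= i < n)%N ->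
  Phi (Y F n i.-1 i) = (Emx F n.+1 i.+1 i, Emx F n i.+1 i).
Proof.
move=> hi; rewrite [LHS]surjective_pairing; congr (_, _).
  apply/matrixP => p q; rewrite Phi1Y; try lia.
  rewrite mxE /cc; have hp := ltn_ord p; have hq := ltn_ord q.
  split_eqs; rewrite /=; try ring.
  by sgfin F (nat_of_ord p) (nat_of_ord q).
apply/matrixP => p q; rewrite Phi2Y; try lia.
rewrite mxE; have hp := ltn_ord p; have hq := ltn_ord q.
split_eqs; rewrite /=; try ring.
by sgfin F (nat_of_ord p) (nat_of_ord q).
Qed.

Lemma Phi_f (F : numFieldType) n i : (1 <= i < n)%N ->
  Phi (Y F n i i.-1) = (Emx F n.+1 i i.+1, Emx F n i i.+1).
Proof.
move=> hi; rewrite [LHS]surjective_pairing; congr (_, _).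
  apply/matrixP => p q; rewrite Phi1Y; try lia.
  rewrite mxE /cc; have hp := ltn_ord p; have hq := ltn_ord q.
  split_eqs; rewrite /=; try ring.
  by sgfin F (nat_of_ord q) (nat_of_ord p).
apply/matrixP => p q; rewrite Phi2Y; try lia.
rewrite mxE; have hp := ltn_ord p; have hq := ltn_ord q.
split_eqs; rewrite /=; try ring.
by sgfin F (nat_of_ord q) (nat_of_ord p).
Qed.

Lemma Phi_en (F : numFieldType) n : (0 < n)%N ->
  Phi (Y F n n.-1 n) = (Emx F n.+1 n.+1 n + Emx F n.+1 n.+1 n, 0).
Proof.
move=> hi; rewrite [LHS]surjective_pairing; congr (_, _).
  apply/matrixP => p q; rewrite Phi1Y; try lia.
  rewrite !mxE /cc; have hp := ltn_ord p; have hq := ltn_ord q.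
  split_eqs; rewrite /=; try ring.
  by sgclose F (nat_of_ord p) (nat_of_ord q).
apply/matrixP => p q; rewrite Phi2Y; try lia.
rewrite !mxE; have hp := ltn_ord p; have hq := ltn_ord q.
split_eqs; rewrite /=; try ring.
Qed.

Lemma Phi_fn (F : numFieldType) n : (0 < n)%N ->
  Phi (Y F n n n.-1) = (Emx F n.+1 n n.+1, 0).
Proof.
move=> hi; rewrite [LHS]surjective_pairing; congr (_, _).
  apply/matrixP => p q; rewrite Phi1Y; try lia.
  rewrite !mxE /cc; have hp := ltn_ord p; have hq := ltn_ord q.
  split_eqs; rewrite /=; try ring.
  all: try by sgclose F (nat_of_ord q) (nat_of_ord p).
apply/matrixP => p q; rewrite Phi2Y; try lia.
rewrite !mxE; have hp := ltn_ord p; have hq := ltn_ord q.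
split_eqs; rewrite /=; try ring.
Qed.

Lemma Phi_d (F : numFieldType) n i : (1 <= i <= n)%N ->
  Phi (Y F n i.-1 i.-1) = (- Emx F n.+1 i i, - Emx F n i i).
Proof.
move=> hi; rewrite [LHS]surjective_pairing; congr (_, _).
  apply/matrixP => p q; rewrite Phi1Y; try lia.
  rewrite !mxE /cc; have hp := ltn_ord p; have hq := ltn_ord q.
  split_eqs; rewrite /=; try ring.
  all: try by sgeq F (nat_of_ord q) (nat_of_ord p).
apply/matrixP => p q; rewrite Phi2Y; try lia.
rewrite !mxE; have hp := ltn_ord p; have hq := ltn_ord q.
split_eqs; rewrite /=; try ring.
all: try by sgeq F (nat_of_ord q) (nat_of_ord p).
Qed.

Lemma Phi_dl (F : numFieldType) n : (0 < n)%N ->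
  Phi (Y F n n n) = (- (Emx F n.+1 n.+1 n.+1 + Emx F n.+1 n.+1 n.+1), 0).
Proof.
move=> hi; rewrite [LHS]surjective_pairing; congr (_, _).
  apply/matrixP => p q; rewrite Phi1Y; try lia.
  rewrite !mxE /cc; have hp := ltn_ord p; have hq := ltn_ord q.
  split_eqs; rewrite /=; try ring.
  all: try by sgeq F (nat_of_ord q) (nat_of_ord p).
apply/matrixP => p q; rewrite Phi2Y; try lia.
rewrite !mxE; have hp := ltn_ord p; have hq := ltn_ord q.
split_eqs; rewrite /=; try ring.
Qed.

Lemma Emx_D (F : fieldType) n p q : (p.-1 <= n.*2)%N -> (q.-1 <= n.*2)%N ->
  Emx F n.*2.+1 p q = D F n p.-1 q.-1.
Proof.
move=> hp hq; apply/matrixP => i j; rewrite !mxE.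
by rewrite !ord_inord_eq.
Qed.

Lemma be_Y (F : fieldType) n i : (1 <= i <= n)%N -> @be F n i = Y F n i.-1 i.
Proof.
move=> hi; rewrite /be /Y !Emx_D /=; try lia.
by congr (_ + D F n _ _); lia.
Qed.

Lemma bf_Y (F : fieldType) n i : (1 <= i <= n)%N -> @bf F n i = Y F n i i.-1.
Proof.
move=> hi; rewrite /bf /Y !Emx_D /=; try lia.
by congr (_ + D F n _ _); lia.
Qed.

Lemma bd_Y (F : fieldType) n i : (1 <= i <= n)%N -> @bd F n i = Y F n i.-1 i.-1.
Proof.
move=> hi; rewrite /bd /Y !Emx_D /=; try lia.
by congr (_ + D F n _ _); lia.
Qed.

Lemma bdl_Y (F : fieldType) n : @bd_last F n = Y F n n n.
Proof.
rewrite /bd_last /Y Emx_D /=; try lia.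
by rewrite (_ : (n.*2 - n = n)%N) ?mulr2n //; lia.
Qed.

Lemma spec_gen (F : numFieldType) n (hn : (0 < n)%N) (Uj U : algType F)
  (iota : 'M[F]_(n.*2.+1) -> Uj) (jota : 'M[F]_n.+1 * 'M[F]_n -> U)
  (psi1 psi2 : Uj -> U) :
  @psi_spec F n Uj U iota jota psi1 -> @psi_spec F n Uj U iota jota psi2 ->
  (forall a, (a <= n)%N -> psi1 (iota (Y F n a a)) = psi2 (iota (Y F n a a))) /\
  (forall a, (a < n.*2)%N -> psi1 (iota (Y F n a a.+1)) = psi2 (iota (Y F n a a.+1))).
Proof.
move=> [s1e [s1en [s1fn [s1d s1dl]]]] [s2e [s2en [s2fn [s2d s2dl]]]]; split.
  move=> a ha; case: (ltnP a n) => h.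
    have -> : Y F n a a = @bd F n a.+1 by rewrite bd_Y //; lia.
    by rewrite s1d ?s2d //; lia.
  have -> : a = n by lia.
  by rewrite -bdl_Y s1dl s2dl.
move=> a ha; case: (ltnP a n) => h.
  case: (ltnP a.+1 n) => h2.
    have -> : Y F n a a.+1 = @be F n a.+1 by rewrite be_Y //; lia.
    have hh : (0 < a.+1 < n)%N by lia.
    by rewrite (s1e a.+1 hh).1 (s2e a.+1 hh).1.
  have -> : Y F n a a.+1 = @be F n n by rewrite be_Y; [congr Y; lia | lia].
  by rewrite s1en s2en.
rewrite -Y_sym; try lia.
have -> : (n.*2 - a.+1 = (n.*2 - a).-1)%N by lia.
rewrite -bf_Y; last lia.
case: (ltnP (n.*2 - a) n) => h2.
  have hh : (0 < n.*2 - a < n)%N by lia.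
  by rewrite (s1e _ hh).2 (s2e _ hh).2.
have -> : (n.*2 - a = n)%N by lia.
by rewrite s1fn s2fn.
Qed.

Unset Implicit Arguments. Set Strict Implicit. Set Printing Implicit Defensive.

Theorem lemma2 (F : numClosedFieldType) (n : nat) (hn : (0 < n)%N)
    (Uj : algType F) (iota : 'M[F]_(n.*2.+1) -> Uj)
    (HUj : is_UEA (@mxbr F _) (@gtheta F n) iota)
    (U : algType F) (jota : 'M[F]_n.+1 * 'M[F]_n -> U)
    (HU : is_UEA (@pbr F n) predT jota) :
  exists psi : {lrmorphism Uj -> U},
    @psi_spec F n Uj U iota jota psi /\
    (forall psi' : {lrmorphism Uj -> U}, @psi_spec F n Uj U iota jota psi' -> psi' =1 psi).
Proof.
have [hj _] := HU.
have jD : forall x y, jota (x + y) = jota x + jota y.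
  by move=> x y; apply: (lhD hj).
have j0 : jota 0 = 0 by apply: (lh0 hj).
have jN : forall x, jota (- x) = - jota x by move=> x; apply: (lhN hj).
pose phi := fun X => jota (Phi X).
have hphi : lie_hom_on (@mxbr F _) (@gtheta F n) phi.
  split.
    by move=> c X W hX hW; rewrite /phi Phi_lin; apply: hj.1.
  move=> X W /gthetaP hX /gthetaP hW; rewrite /phi Phi_br //; exact: hj.2.
have [psi [hpsi huniq]] := HUj.2 U phi hphi.
have hi := HUj.1.
have spec : @psi_spec F n Uj U iota jota psi.
  split; [|split; [|split; [|split]]].
  - move=> i hi'; split.
      rewrite be_Y ?hpsi ?Y_in; try lia.
      rewrite /phi Phi_e // -jD; congr jota.
      by apply: injective_projections => /=; rewrite ?addr0 ?add0r.
    rewrite bf_Y ?hpsi ?Y_in; try lia.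
    rewrite /phi Phi_f // -jD; congr jota.
    by apply: injective_projections => /=; rewrite ?addr0 ?add0r.
  - rewrite be_Y ?hpsi ?Y_in; try lia.
    rewrite /phi Phi_en // mulr2n -jD; congr jota.
    by apply: injective_projections => /=; rewrite ?addr0 ?add0r.
  - rewrite bf_Y ?hpsi ?Y_in; try lia.
    by rewrite /phi Phi_fn.
  - move=> i hi'; rewrite bd_Y ?hpsi ?Y_in; try lia.
    rewrite /phi Phi_d // -jN -jN -jD; congr jota.
    by apply: injective_projections => /=; rewrite ?oppr0 ?addr0 ?add0r.
  - rewrite bdl_Y ?hpsi ?Y_in; try lia.
    rewrite /phi Phi_dl // mulr2n -jD -jN; congr jota.
    by apply: injective_projections => /=; rewrite ?addr0 ?oppr0.
exists psi; split => // psi' spec'.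
apply: huniq => x hx; rewrite -hpsi //.
have [gd ge] := spec_gen hn spec' spec.
have hl : forall (ps : {lrmorphism Uj -> U}),
    lie_hom_on (@mxbr F _) (@gtheta F n) (fun X => ps (iota X)).
  move=> ps; split.
    by move=> c X W hX hW; rewrite hi.1 // linearP.
  by move=> X W hX hW; rewrite hi.2 // rmorphB !rmorphM.
exact: (lie_agree (hl psi') (hl psi) gd ge).
Qed.
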